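(* Let $K$ be a real compact nc convex set. Then the real operator system $A(K)$ has trivial involution ($f^*=f$ for all $f\in A(K)$) if and only if $K$ is symmetric. Equivalently, a real operator system $V$ has trivial involution if and only if $\varphi(v)^{\mathsf T}=\varphi(v)$ for every $n$, every $\varphi\in\mathrm{UCP}(V,M_n(\mathbb{R}))$ and every $v\in V$.
   Context: A real compact nc convex set $K$ over a real dual operator space $E$ is a graded set $K=\bigsqcup_nK_n$, $K_n\subseteq M_n(E)$ weak$^*$ compact, closed under direct sums $\sum\alpha_ix_i\alpha_i^{\mathsf T}$ and compressions $\beta^{\mathsf T}x\beta$ by real isometries. $K$ is called symmetric if every $k=[k_{ij}]\in K_n$ satisfies $k^{\mathsf T}=k$, i.e. $k_{ji}=k_{ij}$ for all $i,j$. $A(K)$ is the real operator system of continuous nc affine maps $K\to\bigsqcup_nM_n(\mathbb{R})$ with involution $f^*(k)=f(k)^{\mathsf T}$, cones $M_n(A(K))^+=\{[f_{ij}]:[f_{ij}(k)]\ge0\ \forall k\}$ and unit the constant $1$. Every real compact nc convex set $K$ is nc affinely homeomorphic to $\mathrm{ncS}(A(K))=\bigsqcup_n\mathrm{UCP}(A(K),M_n(\mathbb{R}))$ via $k\mapsto(f\mapsto f(k))$. *)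

(* Defs.v *)
From HB Require Import structures.
From mathcomp Require Import all_boot all_order all_algebra.
From mathcomp Require Import reals.
Set Implicit Arguments. Unset Strict Implicit. Unset Printing Implicit Defensive.
Import Order.TTheory GRing.Theory Num.Theory.
Local Open Scope ring_scope.

Section RealNC.
Variable R : realType.

Definition mxcomp (V : lmodType R) (m n p q : nat)
  (a : 'M[R]_(m, n)) (x : 'M[V]_(n, p)) (b : 'M[R]_(p, q)) : 'M[V]_(m, q) :=
  \matrix_(i, j) \sum_(k < n) \sum_(l < p) (a i k * b l j) *: x k l.

Definition isometry (m n : nat) (b : 'M[R]_(m, n)) : Prop := b^T *m b = 1%:M.

Definition psd (n : nat) (A : 'M[R]_n) : Prop :=
  A^T = A /\ forall x : 'cV[R]_n, 0 <= (x^T *m A *m x) 0 0.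

(* the block matrix [B i j] in M_m(M_n(R)) is positive semidefinite
   (written out entrywise) *)
Definition block_psd (m n : nat) (B : 'I_m -> 'I_m -> 'M[R]_n) : Prop :=
  (forall i j, (B i j)^T = B j i) /\
  forall xi : 'I_m -> 'cV[R]_n,
    0 <= \sum_(i < m) \sum_(j < m) ((xi i)^T *m B i j *m xi j) 0 0.

Definition unit_mx (V : lmodType R) (e : V) (n : nat) : 'M[V]_n :=
  \matrix_(i, j) (if i == j then e else 0).

Definition sa_mx (V : lmodType R) (inv : V -> V) (n : nat) (x : 'M[V]_n) : Prop :=
  (map_mx inv x)^T = x.

Definition real_opsys (V : lmodType R) (inv : V -> V)
  (cone : forall n, 'M[V]_n -> Prop) (e : V) : Prop :=
  [/\ (forall (a : R) (u v : V), inv (a *: u + v) = a *: inv u + inv v),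
      (forall v, inv (inv v) = v),
      (forall n x, cone n x -> sa_mx inv x),
      (forall n x y, cone n x -> cone n y -> cone n (x + y))
    & (forall n (r : R) x, 0 <= r -> cone n x -> cone n (map_mx (fun v => r *: v) x))] /\
  [/\ (forall n x, cone n x -> cone n (- x) -> x = 0),
      (forall m n (a : 'M[R]_(n, m)) x, cone n x -> cone m (mxcomp a^T x a)),
      (forall n x, sa_mx inv x -> exists r : R, 0 < r /\ cone n (unit_mx (r *: e) n + x))
    & (forall n x, sa_mx inv x ->
         (forall r : R, 0 < r -> cone n (unit_mx (r *: e) n + x)) -> cone n x)].

Definition ucp (V : lmodType R) (cone : forall n, 'M[V]_n -> Prop) (e : V)
  (n : nat) (phi : V -> 'M[R]_n) : Prop :=
  [/\ (forall (a : R) (u v : V), phi (a *: u + v) = a *: phi u + phi v),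
      phi e = 1%:M
    & (forall m (x : 'M[V]_m), cone m x -> block_psd (fun i j => phi (x i j)))].

Definition trivial_involution (V : lmodType R) (inv : V -> V) : Prop :=
  forall v, inv v = v.

(* pair : E_* x E -> R exhibits E as the dual of E_*; the weak* topology on E
   is sigma(E, E_* ), and on M_n(E) it is the entrywise (product) topology. *)
Definition dual_pairing (E F : lmodType R) (pair : F -> E -> R) : Prop :=
  [/\ (forall w (a : R) x y, pair w (a *: x + y) = a * pair w x + pair w y),
      (forall x (a : R) w v, pair (a *: w + v) x = a * pair w x + pair v x)
    & (forall x, (forall w, pair w x = 0) -> x = 0)].

Definition wnbhd (E F : lmodType R) (pair : F -> E -> R) (n : nat)
  (x : 'M[E]_n) (L : seq (F * 'I_n * 'I_n)) (d : R) : 'M[E]_n -> Prop :=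
  fun y => forall t, t \in L -> `|pair t.1.1 (y t.1.2 t.2 - x t.1.2 t.2)| < d.

Definition wopen (E F : lmodType R) (pair : F -> E -> R) (n : nat)
  (U : 'M[E]_n -> Prop) : Prop :=
  forall x, U x -> exists L d, 0 < d /\ forall y, wnbhd pair x L d y -> U y.

Definition wcompact (E F : lmodType R) (pair : F -> E -> R) (n : nat)
  (S : 'M[E]_n -> Prop) : Prop :=
  forall (I : Type) (U : I -> 'M[E]_n -> Prop),
    (forall i, wopen pair (U i)) -> (forall x, S x -> exists i, U i x) ->
    exists (p : nat) (g : 'I_p -> I), forall x, S x -> exists k, U (g k) x.

Definition nc_convex (E : lmodType R) (K : forall n, 'M[E]_n -> Prop) : Prop :=
  (forall n p (ns : 'I_p -> nat) (x : forall i, 'M[E]_(ns i))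
          (a : forall i, 'M[R]_(n, ns i)),
     (forall i, K (ns i) (x i)) -> (forall i, isometry (a i)) ->
     \sum_(i < p) a i *m (a i)^T = 1%:M ->
     K n (\sum_(i < p) mxcomp (a i) (x i) (a i)^T))
  /\ (forall m n (b : 'M[R]_(n, m)) x, isometry b -> K n x -> K m (mxcomp b^T x b)).

Definition compact_nc_convex (E F : lmodType R) (pair : F -> E -> R)
  (K : forall n, 'M[E]_n -> Prop) : Prop :=
  nc_convex K /\ forall n, wcompact pair (K n).

Definition nc_symmetric (E : lmodType R) (K : forall n, 'M[E]_n -> Prop) : Prop :=
  forall n k, K n k -> k^T = k.

Definition nc_affine (E : lmodType R) (K : forall n, 'M[E]_n -> Prop)
  (f : forall n, 'M[E]_n -> 'M[R]_n) : Prop :=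
  (forall n p (ns : 'I_p -> nat) (x : forall i, 'M[E]_(ns i))
          (a : forall i, 'M[R]_(n, ns i)),
     (forall i, K (ns i) (x i)) -> (forall i, isometry (a i)) ->
     \sum_(i < p) a i *m (a i)^T = 1%:M ->
     f n (\sum_(i < p) mxcomp (a i) (x i) (a i)^T) =
       \sum_(i < p) a i *m f (ns i) (x i) *m (a i)^T)
  /\ (forall m n (b : 'M[R]_(n, m)) x, isometry b -> K n x ->
        f m (mxcomp b^T x b) = b^T *m f n x *m b).

Definition wcontinuous_on (E F : lmodType R) (pair : F -> E -> R)
  (K : forall n, 'M[E]_n -> Prop) (f : forall n, 'M[E]_n -> 'M[R]_n) : Prop :=
  forall n x, K n x -> forall eps : R, 0 < eps ->
    exists L d, 0 < d /\ forall y, K n y -> wnbhd pair x L d y ->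
      forall i j, `|f n y i j - f n x i j| < eps.

Definition in_AK (E F : lmodType R) (pair : F -> E -> R)
  (K : forall n, 'M[E]_n -> Prop) (f : forall n, 'M[E]_n -> 'M[R]_n) : Prop :=
  nc_affine K f /\ wcontinuous_on pair K f.

(* A(K) has trivial involution: f^* = f for every f in A(K),
   where f^*(k) = f(k)^T (equality as functions on K) *)
Definition AK_trivial_involution (E F : lmodType R) (pair : F -> E -> R)
  (K : forall n, 'M[E]_n -> Prop) : Prop :=
  forall f, in_AK pair K f -> forall n k, K n k -> (f n k)^T = f n k.

End RealNC.

(* Main.v *)
Require Import Defs.
From HB Require Import structures.
From mathcomp Require Import all_boot all_order all_algebra.
From mathcomp Require Import reals.
Import Order.TTheory GRing.Theory Num.Theory.
Local Open Scope ring_scope.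

From mathcomp Require Import boolp classical_sets ring lra.
From Stdlib Require Import ClassicalEpsilon Classical.
Set Implicit Arguments. Unset Strict Implicit. Unset Printing Implicit Defensive.
Import Order.TTheory GRing.Theory Num.Theory.
Local Open Scope ring_scope.

Section Riesz.
Local Open Scope classical_set_scope.
Variable R : realType.
Variable W : lmodType R.
Variable P : W -> Prop.
Hypothesis PD : forall x y, P x -> P y -> P (x + y).
Hypothesis PZ : forall r x, 0 <= r -> P x -> P (r *: x).
Hypothesis P0 : P 0.
Variable u : W.
Hypothesis unitP : forall x, exists r, P (r *: u - x).

Definition glin (G : set (W * R)) := forall x a y b k, G (x, a) -> G (y, b) -> G (k *: x + y, k * a + b).
Definition gpos (G : set (W * R)) := forall x a, G (x, a) -> P x -> 0 <= a.

Variable G0 : set (W * R).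
Hypothesis G0lin : glin G0.
Hypothesis G0pos : gpos G0.
Variable gu : R.
Hypothesis G0u : G0 (u, gu).

Lemma glin0 G : glin G -> G (u, gu) -> G (0, 0).
Proof.
move=> Gl Gu; have := Gl _ _ _ _ (-1) Gu Gu.
by rewrite scaleN1r mulN1r !addNr.
Qed.

Lemma gfun G x a b : glin G -> gpos G -> G (x, a) -> G (x, b) -> a = b.
Proof.
move=> Gl Gp Ha Hb.
have h1 := Gp _ _ (Gl _ _ _ _ (-1) Ha Hb); rewrite scaleN1r addNr mulN1r in h1.
have h2 := Gp _ _ (Gl _ _ _ _ (-1) Hb Ha); rewrite scaleN1r addNr mulN1r in h2.
move: (h1 P0) (h2 P0); rewrite addrC subr_ge0 addrC subr_ge0 => ??; apply/eqP; rewrite eq_le; apply/andP; split => //.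
Qed.

Lemma gmono G x a y b : glin G -> gpos G -> G (x, a) -> G (y, b) -> P (y - x) -> a <= b.
Proof.
move=> Gl Gp Ha Hb Pyx.
have := Gp _ _ (Gl _ _ _ _ (-1) Ha Hb); rewrite scaleN1r mulN1r addrC (addrC (-a)) => /(_ Pyx).
by rewrite subr_ge0.
Qed.

Definition Good (G : set (W * R)) := glin G /\ gpos G /\ (G0 `<=` G \/ G = set0).

Lemma good_union (F : set (set (W * R))) : F `<=` Good -> total_on F subset -> Good (\bigcup_(X in F) X).
Proof.
move=> FG Ftot; split; [|split].
- move=> x a y b k [X FX Xa] [Y FY Yb].
  have [XY|YX] := Ftot _ _ FX FY.
  + exists Y => //; have [Yl _] := FG _ FY; exact: Yl (XY _ Xa) Yb.
  + exists X => //; have [Xl _] := FG _ FX; exact: Xl Xa (YX _ Yb).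
- move=> x a [X FX Xa]; have [_ [Xp _]] := FG _ FX; exact: Xp Xa.
- have [[X [FX Xne]]|] := pselect (exists X, F X /\ X <> set0).
  + left; have [_ [_ [H|H]]] := FG _ FX; last by [].
    by move=> p G0p; exists X => //; exact: H.
  + move=> nX; right; apply/seteqP; split => // p [X FX Xp].
    exfalso; apply: nX; exists X; split => // X0; by rewrite X0 in Xp.
Qed.

Section Step.
Variable A : set (W * R).
Hypothesis Al : glin A.
Hypothesis Ap : gpos A.
Hypothesis AG0 : G0 `<=` A.
Variable v : W.

Let Au : A (u, gu). Proof. exact: AG0. Qed.
Let A00 : A (0, 0). Proof. exact: glin0. Qed.

Let S := [set a | exists d, A (d, a) /\ P (v - d)].

Let Sne : S !=set0.
Proof.
have [r Pr] := unitP (- v).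
exists (- r * gu + 0), (- r *: u + 0); split; first exact: Al.
by rewrite addr0 scaleNr opprK addrC; rewrite opprK in Pr.
Qed.

Let Sub y b : A (y, b) -> P (y - v) -> ubound S b.
Proof.
move=> Ayb Pyv a [d [Ada Pvd]]; apply: (gmono Al Ap Ada Ayb).
have -> : y - d = (y - v) + (v - d) by rewrite addrA subrK.
exact: PD.
Qed.

Let Shas : has_sup S.
Proof.
split; first exact: Sne.
have [r Pr] := unitP v.
exists (r * gu + 0); apply: (Sub (y := r *: u + 0)); first exact: Al.
by rewrite addr0.
Qed.

Definition cst := sup S.

Definition ext := [set p | exists d a l, A (d, a) /\ p = (d + l *: v, a + l * cst)].

Lemma ext_lin : glin ext.
Proof.
move=> x a y b k [d [a' [l [Ada [-> ->]]]]] [d2 [a2 [l2 [Ada2 [-> ->]]]]].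
exists (k *: d + d2), (k * a' + a2), (k * l + l2); split; first exact: Al.
congr (_, _).
- by rewrite scalerDr scalerA addrACA scalerDl.
- by rewrite mulrDr mulrA addrACA mulrDl.
Qed.

Lemma ext_pos : gpos ext.
Proof.
move=> x a [d [a' [l [Ada [-> ->]]]]] Px.
have [l0|lneq] := eqVneq l 0.
  rewrite l0 mul0r addr0; apply: (Ap Ada); by rewrite l0 scale0r addr0 in Px.
have [lgt|llt] := ltrP 0 l.
-
  have Ad1 : A (- l^-1 *: d + 0, - l^-1 * a' + 0) by exact: Al.
  rewrite addr0 in Ad1; rewrite addr0 in Ad1.
  have inS : S (- l^-1 * a').
    exists (- l^-1 *: d); split => //.
    have -> : v - - l^-1 *: d = l^-1 *: (d + l *: v).
      by rewrite scaleNr opprK scalerDr scalerA mulVf ?scale1r 1?addrC.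
    by apply: PZ => //; rewrite invr_ge0 ltW.
  have := sup_upper_bound Shas inS; rewrite -/cst => h.
  have : 0 <= l * (cst + l^-1 * a').
    by apply: mulr_ge0; [exact: ltW | rewrite -(opprK (l^-1 * a')) subr_ge0 -mulNr].
  by rewrite mulrDr mulrA mulfV ?mul1r // addrC.
-
  have lt : l < 0 by rewrite lt_neqAle lneq llt.
  set m := - l.
  have mgt : 0 < m by rewrite oppr_gt0.
  have Ad1 : A (m^-1 *: d + 0, m^-1 * a' + 0) by exact: Al.
  rewrite !addr0 in Ad1.
  have hP : P (m^-1 *: d - v).
    have -> : m^-1 *: d - v = m^-1 *: (d + l *: v).
      by rewrite scalerDr scalerA /m invrN mulNr mulVf // scaleN1r.
    by apply: PZ => //; rewrite invr_ge0 ltW.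
  have := ge_sup Sne (Sub Ad1 hP); rewrite -/cst => h.
  have : 0 <= m * (m^-1 * a' - cst) by apply: mulr_ge0; [exact: ltW | rewrite subr_ge0].
  by rewrite mulrBr mulrA mulfV ?mul1r ?gt_eqF // /m mulNr opprK.
Qed.

End Step.

Theorem riesz : exists s : W -> R,
  [/\ forall k x y, s (k *: x + y) = k * s x + s y,
      forall x, P x -> 0 <= s x
    & forall x a, G0 (x, a) -> s x = a].
Proof.
have [A [[Al [Ap AG]] Amax]] := Zorn_bigcup good_union.
have AG0 : G0 `<=` A.
  case: AG => // A0; exfalso; apply: (Amax G0); last by split; [|split; [|left]].
  rewrite A0; split => //; move=> /(_ (0, 0)) h; apply: h; exact: glin0.
have Atot : forall x, exists a, A (x, a).
  move=> v; apply: contrapT => nv.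
  apply: (Amax (ext A v)).
    split.
    + by move=> [d a] Ada; exists d, a, 0; split => //; rewrite scale0r mul0r !addr0.
    + move=> /(_ (v, cst A v)) h; apply: nv; exists (cst A v); apply: h.
      exists 0, 0, 1; split; first exact: AG0 (glin0 G0lin G0u).
      by rewrite scale1r mul1r !add0r.
  split; [exact: ext_lin|split; [exact: ext_pos|left]].
  by move=> p /AG0 Ap'; case: p Ap' => d a Ada; exists d, a, 0; split => //; rewrite scale0r mul0r !addr0.
pose s x := epsilon (inhabits (0 : R)) (fun a => A (x, a)).
have sA x : A (x, s x) by exact: (epsilon_spec (inhabits (0:R)) (fun a => A (x, a)) (Atot x)).
exists s; split.
- by move=> k x y; exact: (@gfun A _ _ _ Al Ap (sA (k *: x + y)) (Al _ _ _ _ k (sA x) (sA y))).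
- by move=> x Px; exact: Ap (sA x) Px.
- by move=> x a G0a; exact: (@gfun A _ _ _ Al Ap (sA x) (AG0 _ G0a)).
Qed.

End Riesz.

Section Gen.
Variable R : realType.

Lemma sum2 (M : nmodType) (F : 'I_2 -> M) : \sum_(i < 2) F i = F ord0 + F ord_max.
Proof. by rewrite !big_ord_recl big_ord0 addr0; congr (_ + F _); apply/val_inj. Qed.

Lemma I2_cases (i : 'I_2) : i = ord0 \/ i = ord_max.
Proof. by case: i => [[|[|k]] Hi]; [left|right|]; try apply/val_inj. Qed.

Section LinFun.
Variable (E : lmodType R) (h : E -> R).
Hypothesis hl : forall (a : R) x y, h (a *: x + y) = a * h x + h y.
Lemma lf0 : h 0 = 0.
Proof. by have := hl (-1) 0 0; rewrite scaler0 addr0 mulN1r addNr. Qed.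
Lemma lfD x y : h (x + y) = h x + h y.
Proof. by rewrite -(scale1r x) hl mul1r scale1r. Qed.
Lemma lfZ a x : h (a *: x) = a * h x.
Proof. by rewrite -(addr0 (a *: x)) hl lf0 addr0. Qed.
Lemma lfN x : h (- x) = - h x.
Proof. by rewrite -scaleN1r lfZ mulN1r. Qed.
Lemma lfB x y : h (x - y) = h x - h y.
Proof. by rewrite lfD lfN. Qed.
Lemma lf_sum (I : Type) (r : seq I) (P : pred I) (F : I -> E) :
  h (\sum_(i <- r | P i) F i) = \sum_(i <- r | P i) h (F i).
Proof. exact: (big_morph h lfD lf0). Qed.
End LinFun.

Lemma mul3_2 (P M Q : 'M[R]_2) i j :
  (P^T *m M *m Q) i j = P ord0 i * M ord0 ord0 * Q ord0 j + P ord0 i * M ord0 ord_max * Q ord_max j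
   + P ord_max i * M ord_max ord0 * Q ord0 j + P ord_max i * M ord_max ord_max * Q ord_max j.
Proof.
rewrite !mxE !sum2 !mxE !sum2 !mxE; ring.
Qed.

Definition Am : 'M[R]_2 := \matrix_(i, j) if (i:nat) == 0%N then 2^-1 else if (j:nat) == 0%N then - 2^-1 else 2^-1.
Definition Bm : 'M[R]_2 := \matrix_(i, j) if (i:nat) == 0%N then (if (j:nat) == 0%N then 2^-1 else - 2^-1) else 2^-1.
Definition Dm : 'M[R]_2 := \matrix_(i, j) if (i:nat) == (j:nat) then (if (i:nat) == 0%N then 1 else -1) else 0.

Lemma AB01 (M : 'M[R]_2) : (Am^T *m M *m Am + Bm^T *m M *m Bm) ord0 ord_max = 2^-1 * (M ord0 ord_max - M ord_max ord0).
Proof. rewrite mxE !mul3_2 !mxE /=; by field. Qed.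
Lemma AB10 (M : 'M[R]_2) : (Am^T *m M *m Am + Bm^T *m M *m Bm) ord_max ord0 = 2^-1 * (M ord_max ord0 - M ord0 ord_max).
Proof. rewrite mxE !mul3_2 !mxE /=; by field. Qed.

Lemma mx2P (V : nmodType) (x y : 'M[V]_2) :
  x ord0 ord0 = y ord0 ord0 -> x ord0 ord_max = y ord0 ord_max ->
  x ord_max ord0 = y ord_max ord0 -> x ord_max ord_max = y ord_max ord_max -> x = y.
Proof.
move=> h1 h2 h3 h4; apply/matrixP => i j.
by case: (I2_cases i) => ->; case: (I2_cases j) => ->.
Qed.

Lemma ABiso : Am^T *m Am + Bm^T *m Bm = 1%:M.
Proof.
apply: mx2P; rewrite !mxE !sum2 !mxE /=; try by field.

Qed.

Lemma Diso : Defs.isometry Dm.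
Proof. rewrite /isometry; apply: mx2P; rewrite !mxE !sum2 !mxE /=; by field. Qed.

Lemma Dfix (N : 'M[R]_2) : N ord0 ord_max = 0 -> N ord_max ord0 = 0 -> Dm^T *m N *m Dm = N.
Proof. move=> h1 h2; apply: mx2P; rewrite !mul3_2 !mxE /= ?h1 ?h2; ring. Qed.

Lemma Dfix_inv (N : 'M[R]_2) : N = Dm^T *m N *m Dm -> N ord0 ord_max = 0.
Proof.
move=> h; have : N ord0 ord_max = (Dm^T *m N *m Dm) ord0 ord_max by rewrite -h.
rewrite mul3_2 !mxE /= => e; lra.
Qed.

End Gen.

Section P1b.
Variable R : realType.

Lemma map_mxcomp (E : lmodType R) (h : E -> R) (hl : forall (a : R) x y, h (a *: x + y) = a * h x + h y)
  m n p q (a : 'M[R]_(m, n)) (x : 'M[E]_(n, p)) (b : 'M[R]_(p, q)) :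
  map_mx h (mxcomp a x b) = a *m map_mx h x *m b.
Proof.
apply/matrixP => i j; rewrite !mxE (lf_sum hl).
under eq_bigr do rewrite (lf_sum hl).
under [RHS]eq_bigr do rewrite mxE big_distrl.
rewrite [RHS]exchange_big /=; apply: eq_bigr => k _; apply: eq_bigr => l _.
by rewrite (lfZ hl) !mxE; ring.
Qed.

Lemma map_mx_sumL (E : lmodType R) (h : E -> R) (hl : forall (a : R) x y, h (a *: x + y) = a * h x + h y)
  m n (I : finType) (F : I -> 'M[E]_(m, n)) :
  map_mx h (\sum_i F i) = \sum_i map_mx h (F i).
Proof.
apply/matrixP => i j; rewrite !mxE summxE (lf_sum hl) summxE.
by apply: eq_bigr => k _; rewrite mxE.
Qed.

Definition selm n m (g : 'I_m -> 'I_n) : 'M[R]_(n, m) := \matrix_(r, s) (r == g s)%:R.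

Lemma sum_delta n (u : 'I_n) (G : 'I_n -> R) : \sum_(r < n) (r == u)%:R * G r = G u.
Proof.
rewrite (bigD1 u) //= eqxx mul1r big1 ?addr0 // => r /negbTE ->; by rewrite mul0r.
Qed.

Lemma sel_iso n m (g : 'I_m -> 'I_n) : injective g -> Defs.isometry (selm g).
Proof.
move=> gi; apply/matrixP => s t; rewrite !mxE.
under eq_bigr do rewrite !mxE.
by rewrite sum_delta (inj_eq gi) eq_sym.
Qed.

Lemma sel_mul n m (g : 'I_m -> 'I_n) (M : 'M[R]_n) s t : ((selm g)^T *m M *m selm g) s t = M (g s) (g t).
Proof.
rewrite !mxE; under eq_bigr do rewrite !mxE mulrC.
rewrite sum_delta; under eq_bigr do rewrite !mxE.
by rewrite sum_delta.
Qed.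

End P1b.

Section P1c.
Variable R : realType.

Lemma sep_mx (E F : lmodType R) (pair : F -> E -> R) : dual_pairing pair ->
  forall m n (x y : 'M[E]_(m, n)), (forall w, map_mx (pair w) x = map_mx (pair w) y) -> x = y.
Proof.
move=> [pl _ ps] m n x y h; apply/matrixP => i j; apply/eqP; rewrite -subr_eq0; apply/eqP.
apply: ps => w; rewrite (lfB (pl w)).
by have := congr1 (fun M : 'M[R]_(m, n) => M i j) (h w); rewrite !mxE => ->; rewrite subrr.
Qed.

Definition a2 (t : 'I_2) : 'M[R]_(2 + 2, 2) := if (t : nat) == 0%N then col_mx 1%:M 0 else col_mx 0 1%:M.
Definition c2 : 'M[R]_(2 + 2, 2) := col_mx (Am R) (Bm R).

Lemma a2_iso t : Defs.isometry (a2 t).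
Proof.
rewrite /Defs.isometry /a2; case: ((t : nat) == 0%N);
by rewrite tr_col_mx mul_row_col !trmx0 !trmx1 !mul0mx !mul1mx ?addr0 ?add0r.
Qed.

Lemma a2_sum : \sum_(t < 2) a2 t *m (a2 t)^T = 1%:M.
Proof.
rewrite sum2 /a2 /= !tr_col_mx !mul_col_row !trmx0 !trmx1 ?mul1mx ?mul0mx ?mulmx0 ?mulmx1 add_block_mx.
by rewrite !addr0 !add0r -scalar_mx_block.
Qed.

Lemma c2_iso : Defs.isometry c2.
Proof. by rewrite /Defs.isometry /c2 tr_col_mx mul_row_col ABiso. Qed.

Lemma c2_key (M : 'M[R]_2) :
  c2^T *m (\sum_(t < 2) a2 t *m M *m (a2 t)^T) *m c2 = (Am R)^T *m M *m Am R + (Bm R)^T *m M *m Bm R.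
Proof.
have e t : c2^T *m (a2 t *m M *m (a2 t)^T) *m c2 = (c2^T *m a2 t) *m M *m ((a2 t)^T *m c2) by rewrite !mulmxA.
rewrite sum2 mulmxDr mulmxDl !e /c2 /a2 /= !tr_col_mx !mul_row_col !trmx1 !trmx0.
by rewrite !mulmx1 !mulmx0 !mul1mx !mul0mx !addr0 !add0r.
Qed.

Lemma part1_back (E F : lmodType R) (pair : F -> E -> R) (K : forall n, 'M[E]_n -> Prop) :
  dual_pairing pair -> nc_convex K -> nc_symmetric K -> AK_trivial_involution pair K.
Proof.
move=> dp [Kds Kcp] Ksym f [[fds fcp] _] n k Kk.
have [pl _ _] := dp.
apply/matrixP => i j; rewrite mxE.
have [->|ij] := eqVneq i j; first by [].
pose g (s : 'I_2) : 'I_n := if (s : nat) == 0%N then i else j.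
have gi : injective g.
  move=> s t; rewrite /g; case: (I2_cases s) => ->; case: (I2_cases t) => -> //= e;
  by move: ij; rewrite e eqxx.
pose b := selm R g.
have bI : Defs.isometry b by exact: sel_iso.
pose y := mxcomp b^T k b.
have Ky : K 2 y := Kcp 2 n b k bI Kk.
have fy : f 2 y = b^T *m f n k *m b := fcp 2 n b k bI Kk.
have ysym : y^T = y := Ksym 2 y Ky.
have ys : y ord0 ord_max = y ord_max ord0.
  by have := congr1 (fun M : 'M[E]_2 => M ord_max ord0) ysym; rewrite mxE.
clearbody y.
pose w := \sum_(t < 2) mxcomp (a2 t) ((fun _ => y) t) (a2 t)^T.
have Kw : K (2 + 2)%N w := @Kds (2 + 2)%N 2 (fun _ => 2%N) (fun _ => y) a2 (fun _ => Ky) a2_iso a2_sum.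
have fw : f (2 + 2)%N w = \sum_(t < 2) a2 t *m f 2 y *m (a2 t)^T :=
  @fds (2 + 2)%N 2 (fun _ => 2%N) (fun _ => y) a2 (fun _ => Ky) a2_iso a2_sum.
pose z := mxcomp c2^T w c2.
have Kz : K 2 z := Kcp 2 (2 + 2)%N c2 w c2_iso Kw.
have fz : f 2 z = c2^T *m f (2 + 2)%N w *m c2 := fcp 2 (2 + 2)%N c2 w c2_iso Kw.
have Zm v : map_mx (pair v) z = (Am R)^T *m map_mx (pair v) y *m Am R + (Bm R)^T *m map_mx (pair v) y *m Bm R.
  rewrite /z (map_mxcomp (pl v)) /w (map_mx_sumL (pl v)).
  under eq_bigr do rewrite (map_mxcomp (pl v)).
  by rewrite c2_key.
have zfix : mxcomp (Dm R)^T z (Dm R) = z.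
  apply: (sep_mx dp) => v; rewrite (map_mxcomp (pl v)); apply: Dfix.
  - by rewrite Zm AB01 !mxE ys subrr mulr0.
  - by rewrite Zm AB10 !mxE ys subrr mulr0.
have := fcp 2 2 (Dm R) z (Diso R) Kz; rewrite zfix => /Dfix_inv.
rewrite fz fw c2_key AB01 fy !sel_mul /g /= => /eqP.
rewrite mulf_eq0 invr_eq0 pnatr_eq0 /= subr_eq0 => /eqP.
by move=> ->.
Qed.

Lemma part1_fwd (E F : lmodType R) (pair : F -> E -> R) (K : forall n, 'M[E]_n -> Prop) :
  dual_pairing pair -> AK_trivial_involution pair K -> nc_symmetric K.
Proof.
move=> dp triv n k Kk; have [pl _ _] := dp.
apply: (sep_mx dp) => w.
pose f := fun m (x : 'M[E]_m) => map_mx (pair w) x.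
have fA : in_AK pair K f.
  split; [split|].
  - move=> m p ns x a _ _ _; rewrite /f (map_mx_sumL (pl w)).
    by apply: eq_bigr => i _; rewrite (map_mxcomp (pl w)).
  - by move=> m m' b x _ _; rewrite /f (map_mxcomp (pl w)).
  - move=> m x _ eps eps0.
    exists [seq (w, ij.1, ij.2) | ij : 'I_m * 'I_m], eps; split => // y _ hy i j.
    rewrite /f !mxE -(lfB (pl w)); apply: (hy (w, i, j)).
    apply/mapP; exists (i, j) => //; by rewrite mem_enum.
have := triv f fA n k Kk; rewrite /f => h.
by rewrite -map_trmx h.
Qed.

End P1c.

Section M2.
Variable R : realType.
Variable V : lmodType R.

Definition M2 := 'M[V]_2.
HB.instance Definition _ := GRing.Zmodule.on M2.

Definition m2sc (a : R) (x : M2) : M2 := map_mx ( *:%R a) x.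
Fact m2scA a b v : m2sc a (m2sc b v) = m2sc (a * b) v.
Proof. by apply/matrixP => i j; rewrite !mxE scalerA. Qed.
Fact m2sc1 : left_id 1 m2sc.
Proof. by move=> v; apply/matrixP => i j; rewrite !mxE scale1r. Qed.
Fact m2scDr : right_distributive m2sc +%R.
Proof. by move=> a u v; apply/matrixP => i j; rewrite !mxE scalerDr. Qed.
Fact m2scDl v : {morph m2sc^~ v: a b / a + b}.
Proof. by move=> a b; apply/matrixP => i j; rewrite !mxE scalerDl. Qed.
HB.instance Definition _ := GRing.Zmodule_isLmodule.Build R M2 m2scA m2sc1 m2scDr m2scDl.

Lemma M2scE (a : R) (x : M2) i j : (a *: x) i j = a *: x i j.
Proof. by rewrite mxE. Qed.
Lemma M2DE (x y : M2) i j : (x + y) i j = x i j + y i j.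
Proof. by rewrite mxE. Qed.
Lemma M2NE (x : M2) i j : (- x) i j = - x i j.
Proof. by rewrite mxE. Qed.
Lemma M20E i j : (0 : M2) i j = 0.
Proof. by rewrite mxE. Qed.
Lemma M2sumE (I : finType) (F : I -> M2) i j : (\sum_k F k) i j = \sum_k F k i j.
Proof. by rewrite summxE. Qed.

End M2.

Section P2.
Variable R : realType.
Variable V : lmodType R.
Variable inv : V -> V.
Variable cone : forall n, 'M[V]_n -> Prop.
Arguments cone : clear implicits.
Variable e : V.
Hypothesis invL : forall (a : R) (u v : V), inv (a *: u + v) = a *: inv u + inv v.
Hypothesis invK : forall v, inv (inv v) = v.
Hypothesis coneSA : forall (n : nat) (x : 'M[V]_n), cone n x -> sa_mx inv x.
Hypothesis coneD : forall n x y, cone n x -> cone n y -> cone n (x + y).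
Hypothesis coneZ : forall n (r : R) x, 0 <= r -> cone n x -> cone n (map_mx (fun v => r *: v) x).
Hypothesis coneP : forall n x, cone n x -> cone n (- x) -> x = 0.
Hypothesis coneC : forall m n (a : 'M[R]_(n, m)) x, cone n x -> cone m (mxcomp a^T x a).
Hypothesis arch : forall n x, sa_mx inv x -> exists r : R, 0 < r /\ cone n (unit_mx (r *: e) n + x).
Hypothesis archC : forall n x, sa_mx inv x ->
         (forall r : R, 0 < r -> cone n (unit_mx (r *: e) n + x)) -> cone n x.

Lemma inv0 : inv 0 = 0.
Proof. by have := invL (-1) 0 0; rewrite scaler0 addr0 scaleN1r addNr. Qed.
Lemma invD u v : inv (u + v) = inv u + inv v.
Proof. by have := invL 1 u v; rewrite !scale1r. Qed.
Lemma invZ a u : inv (a *: u) = a *: inv u.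
Proof. by rewrite -(addr0 (a *: u)) invL inv0 addr0. Qed.
Lemma invN u : inv (- u) = - inv u.
Proof. by rewrite -scaleN1r invZ scaleN1r. Qed.
Lemma invB u v : inv (u - v) = inv u - inv v.
Proof. by rewrite invD invN. Qed.

Lemma sa_entry n (x : 'M[V]_n) i j : sa_mx inv x -> inv (x j i) = x i j.
Proof. by move=> h; have := congr1 (fun M : 'M[V]_n => M i j) h; rewrite !mxE. Qed.

Lemma sa_entryP n (x : 'M[V]_n) : (forall i j, inv (x j i) = x i j) -> sa_mx inv x.
Proof. by move=> h; apply/matrixP => i j; rewrite !mxE h. Qed.

Lemma sa0 n : sa_mx inv (0 : 'M[V]_n).
Proof. by apply: sa_entryP => i j; rewrite !mxE inv0. Qed.

Lemma e_sa : inv e = e.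
Proof.
have [r [r0 c]] := arch (sa0 1).
have := sa_entry ord0 ord0 (coneSA c); rewrite !mxE eqxx addr0 invZ => /eqP.
by rewrite -subr_eq0 -scalerBr scaler_eq0 (gt_eqF r0) subr_eq0 => /eqP.
Qed.

Notation i0 := (ord0 : 'I_2).
Notation i1 := (ord_max : 'I_2).

Definition m2 (a b c d : V) : M2 V :=
  \matrix_(i, j) if (i : nat) == 0%N then (if (j : nat) == 0%N then a else b)
                 else (if (j : nat) == 0%N then c else d).

Lemma m2_eq (x : M2 V) a b c d : x i0 i0 = a -> x i0 i1 = b -> x i1 i0 = c -> x i1 i1 = d -> x = m2 a b c d.
Proof. by move=> h1 h2 h3 h4; apply: mx2P; rewrite mxE. Qed.

Lemma mxcomp2 (P Q : 'M[R]_2) (x : 'M[V]_2) i j :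
  mxcomp P x Q i j = (P i i0 * Q i0 j) *: x i0 i0 + (P i i0 * Q i1 j) *: x i0 i1
                   + (P i i1 * Q i0 j) *: x i1 i0 + (P i i1 * Q i1 j) *: x i1 i1.
Proof. by rewrite mxE !sum2 addrA. Qed.

Variable w : V.
Hypothesis winv : inv w = - w.
Hypothesis wne : w != 0.

Definition Mx (al de ga be : R) : M2 V :=
  m2 (al *: e) (ga *: e + be *: w) (ga *: e - be *: w) (de *: e).

Lemma Mx_lin k a d g b a' d' g' b' :
  k *: Mx a d g b + Mx a' d' g' b' = Mx (k * a + a') (k * d + d') (k * g + g') (k * b + b').
Proof.
apply: m2_eq; rewrite !mxE /= ?scalerDr ?scalerBr ?scalerA ?scalerDl //.
- by rewrite addrACA.
- by rewrite scalerN scalerA opprD addrACA.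
Qed.

Lemma Mx_sa a d g b : sa_mx inv (Mx a d g b).
Proof.
apply: sa_entryP => i j; case: (I2_cases i) => ->; case: (I2_cases j) => ->;
rewrite !mxE /= ?invD ?invN ?invZ ?e_sa ?winv ?scalerN ?opprK //.
Qed.

Definition sap (x : M2 V) : M2 V := \matrix_(i, j) ((2^-1 : R) *: (x i j + inv (x j i))).

Lemma sap_lin k x y : sap (k *: x + y) = k *: sap x + sap y.
Proof.
apply/matrixP => i j; rewrite !mxE invD invZ.
by rewrite scalerA mulrC -scalerA -scalerDr addrACA -scalerDr.
Qed.

Lemma sap_sa x : sa_mx inv x -> sap x = x.
Proof.
move=> h; apply/matrixP => i j; rewrite !mxE (sa_entry _ _ h).
by rewrite -[X in _ + X]scale1r -{1}(scale1r (x i j)) -scalerDl scalerA mulVf ?scale1r // pnatr_eq0.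
Qed.

Lemma sap_is_sa x : sa_mx inv (sap x).
Proof. by apply: sa_entryP => i j; rewrite !mxE invZ invD invK addrC. Qed.

Definition PW (x : M2 V) := cone 2 (sap x).

Lemma coneW (r : R) (x : M2 V) : 0 <= r -> cone 2 x -> cone 2 (r *: x).
Proof. exact: coneZ. Qed.

Lemma e2_cone : cone 2 (Mx 1 1 0 0).
Proof.
have [r [r0 c]] := arch (sa0 2).
have -> : Mx 1 1 0 0 = r^-1 *: ((unit_mx (r *: e) 2 + 0) : M2 V).
  apply/esym; rewrite /Mx; apply: m2_eq; rewrite !mxE /= ?scalerA ?scale0r ?add0r ?addr0 ?subr0 ?scaler0 ?oppr0 //;
  by rewrite scalerA mulVf ?gt_eqF.
by apply: coneW => //; rewrite invr_ge0 ltW.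
Qed.

Lemma PW0 : PW 0.
Proof.
rewrite /PW; have -> : sap 0 = 0 *: Mx 1 1 0 0.
  by rewrite scale0r; apply/matrixP => i j; rewrite !mxE inv0 addr0 scaler0.
exact: coneW e2_cone.
Qed.

Lemma PWD x y : PW x -> PW y -> PW (x + y).
Proof. move=> hx hy; rewrite /PW -(scale1r x) sap_lin scale1r; exact: coneD. Qed.


Lemma sap0 : sap 0 = 0.
Proof. by apply/matrixP => i j; rewrite !mxE inv0 addr0 scaler0. Qed.

Lemma sapN x : sap (- x) = - sap x.
Proof. have h := sap_lin (-1) x 0; rewrite !scaleN1r sap0 !addr0 in h; exact: h. Qed.

Lemma sapD x y : sap (x + y) = sap x + sap y.
Proof. by have h := sap_lin 1 x y; rewrite !scale1r in h. Qed.
Lemma sapZ k x : sap (k *: x) = k *: sap x.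
Proof. by have h := sap_lin k x 0; rewrite sap0 !addr0 in h. Qed.

Lemma PWZ r x : 0 <= r -> PW x -> PW (r *: x).
Proof. by move=> r0 hx; rewrite /PW -(addr0 (r *: x)) sap_lin sap0 addr0; exact: coneW. Qed.

Lemma Mx_eq a d g b a' d' g' b' : a = a' -> d = d' -> g = g' -> b = b' -> Mx a d g b = Mx a' d' g' b'.
Proof. by move=> -> -> -> ->. Qed.

Lemma Mx0 : Mx 0 0 0 0 = 0.
Proof.
apply/esym; rewrite /Mx; apply: m2_eq; rewrite !mxE /= ?scale0r ?addr0 ?subr0 //.
Qed.

Lemma Mx_scale r a d g b : r *: Mx a d g b = Mx (r * a) (r * d) (r * g) (r * b).
Proof. have h := Mx_lin r a d g b 0 0 0 0; rewrite Mx0 !addr0 in h; exact: h. Qed.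

Lemma unitM r x : ((unit_mx (r *: e) 2 : M2 V) + x) = r *: Mx 1 1 0 0 + x.
Proof.
congr (_ + _); rewrite Mx_scale /Mx; apply: m2_eq; rewrite !mxE /= ?mulr0 ?mulr1 ?scale0r ?addr0 ?subr0 //.
Qed.

Definition Rm : 'M[R]_2 := \matrix_(i, j) if (i : nat) == 0%N then (if (j : nat) == 0%N then 0 else 1)
                                          else (if (j : nat) == 0%N then -1 else 0).

Lemma Rm_iso : Defs.isometry Rm.
Proof. rewrite /Defs.isometry; apply: mx2P; rewrite !mxE !sum2 !mxE /=; by field. Qed.

Ltac vsimp := do 3 rewrite ?mulr1 ?mul1r ?mulr0 ?mul0r ?mulrN ?mulNr ?mulrNN ?scale0r ?scale1r ?scaleN1r
   ?addr0 ?add0r ?subr0 ?sub0r ?opprD ?scaleNr ?opprK ?oppr0.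

Lemma Mx_D a d g b : mxcomp (Dm R)^T (Mx a d g b) (Dm R) = Mx a d (- g) (- b).
Proof.
rewrite {2}/Mx; apply: m2_eq; rewrite !mxcomp2 !mxE /=; vsimp; try done; by rewrite ?scaleNr ?opprK ?addrC.
Qed.

Lemma Mx_R a d g b : mxcomp Rm^T (Mx a d g b) Rm = Mx d a (- g) b.
Proof.
rewrite {2}/Mx; apply: m2_eq; rewrite !mxcomp2 !mxE /=; vsimp; try done; by rewrite ?scaleNr ?opprK ?addrC.
Qed.

Definition Xw := Mx 0 0 0 1.

Lemma Xw_ncone : ~ cone 2 Xw.
Proof.
move=> cX; have cD := coneC (Dm R) cX; rewrite /Xw Mx_D in cD.
have e1 : Mx 0 0 (- 0) (- 1) = - Xw.
  by rewrite -scaleN1r Mx_scale; apply: Mx_eq; rewrite ?mulr0 ?oppr0 ?mulr1.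
rewrite e1 in cD; have := coneP cX cD => /(congr1 (fun M : 'M[V]_2 => M ord0 ord_max)).
rewrite /Xw /Mx !mxE /= scale0r add0r scale1r => w0; by move: wne; rewrite w0 eqxx.
Qed.

Lemma exists_t : exists t : R, 0 < t /\ ~ cone 2 (Mx t t 0 1).
Proof.
apply: NNPP => hn; apply: Xw_ncone; apply: archC; first exact: Mx_sa.
move=> r r0; apply: NNPP => hc; apply: hn; exists r; split => //.
rewrite unitM /Xw Mx_lin in hc.
have e1 : Mx (r * 1 + 0) (r * 1 + 0) (r * 0 + 0) (r * 0 + 1) = Mx r r 0 1.
  by apply: Mx_eq; rewrite ?mulr1 ?mulr0 ?addr0 ?add0r.
by rewrite e1 in hc.
Qed.

Lemma Mx_cone_sa a d g b : PW (Mx a d g b) <-> cone 2 (Mx a d g b).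
Proof. by rewrite /PW sap_sa //; exact: Mx_sa. Qed.

Lemma unitPW (x : M2 V) : exists r : R, PW (r *: Mx 1 1 0 0 - x).
Proof.
have sa1 : sa_mx inv (- sap x).
  apply: sa_entryP => i j; rewrite !mxE invN; congr (- _).
  by have := sa_entry i j (sap_is_sa x); rewrite !mxE.
have [r [r0 c]] := arch sa1.
exists r; rewrite /PW sapD sapZ sapN sap_sa; last exact: Mx_sa.
by rewrite -unitM.
Qed.

Section WithT.
Variable t : R.
Hypothesis t0 : 0 < t.
Hypothesis tnc : ~ cone 2 (Mx t t 0 1).

Lemma core S c : cone 2 (Mx S S 0 c) -> cone 2 (Mx S S 0 (- c)) -> `|c| * t <= S.
Proof.
move=> c1 c2.
have cc : cone 2 (Mx S S 0 `|c|).
  by case: (ler0P c) => _; [by rewrite ?c2|by rewrite ?c1].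
rewrite leNgt; apply/negP => lt.
have [c0|cpos] := eqVneq `|c| 0.
- rewrite c0 mul0r in lt.
  have cm : cone 2 (Mx (-1) (-1) 0 0).
    have := coneW (r := - S^-1) _ cc; rewrite Mx_scale c0.
    have -> : Mx (- S^-1 * S) (- S^-1 * S) (- S^-1 * 0) (- S^-1 * 0) = Mx (-1) (-1) 0 0.
      by apply: Mx_eq; rewrite ?mulr0 // mulNr mulVf ?lt_eqF.
    by apply; rewrite oppr_ge0 invr_le0 ltW.
  have [r1 [r10 c3]] := arch (Mx_sa 0 0 0 1).
  rewrite unitM Mx_lin in c3.
  apply: tnc; case: (lerP r1 t) => h.
  + have := coneD (coneW (r := t - r1) _ e2_cone) c3; rewrite Mx_lin.
    have -> : Mx ((t - r1) * 1 + (r1 * 1 + 0)) ((t - r1) * 1 + (r1 * 1 + 0)) ((t - r1) * 0 + (r1 * 0 + 0)) ((t - r1) * 0 + (r1 * 0 + 1)) = Mx t t 0 1.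
      by apply: Mx_eq; ring.
    by apply; rewrite subr_ge0.
  + have := coneD (coneW (r := r1 - t) _ cm) c3; rewrite Mx_lin.
    have -> : Mx ((r1 - t) * -1 + (r1 * 1 + 0)) ((r1 - t) * -1 + (r1 * 1 + 0)) ((r1 - t) * 0 + (r1 * 0 + 0)) ((r1 - t) * 0 + (r1 * 0 + 1)) = Mx t t 0 1.
      by apply: Mx_eq; ring.
    by apply; rewrite subr_ge0 ltW.
- have cp : 0 < `|c| by rewrite lt_neqAle eq_sym cpos normr_ge0.
  have ci : 0 <= `|c|^-1 by rewrite invr_ge0 ltW.
  have c4 := coneW ci cc.
  rewrite Mx_scale in c4.
  have c5 := coneW (r := t - `|c|^-1 * S) _ e2_cone.
  apply: tnc; have := coneD (c5 _) c4; rewrite Mx_lin.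
  have -> : Mx ((t - `|c|^-1 * S) * 1 + `|c|^-1 * S) ((t - `|c|^-1 * S) * 1 + `|c|^-1 * S)
      ((t - `|c|^-1 * S) * 0 + `|c|^-1 * 0) ((t - `|c|^-1 * S) * 0 + `|c|^-1 * `|c|) = Mx t t 0 1.
    apply: Mx_eq; rewrite ?mulr1 ?mulr0 ?add0r ?subrK //; by rewrite mulVf ?gt_eqF.
  apply; rewrite subr_ge0 ler_pdivrMl //.
  by rewrite ltW // mulrC.
Qed.

Definition G0 : (M2 V * R) -> Prop :=
  fun p => exists a d g b, p = (Mx a d g b, a + d + b * t).

Lemma G0lin : glin G0.
Proof.
move=> x a y b k [a1 [d1 [g1 [b1 [-> ->]]]]] [a2 [d2 [g2 [b2 [-> ->]]]]].
exists (k * a1 + a2), (k * d1 + d2), (k * g1 + g2), (k * b1 + b2).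
by rewrite Mx_lin; congr (_, _); ring.
Qed.

Lemma G0pos : gpos PW G0.
Proof.
move=> x v [a [d [g [b [-> ->]]]]] /Mx_cone_sa cx.
have cR := coneC Rm cx; rewrite Mx_R in cR.
have := coneD cx cR; rewrite -[X in cone 2 (X + _)]scale1r Mx_lin => cS.
have cS' := coneC (Dm R) cS; rewrite Mx_D in cS'.
have e1 : Mx (1 * a + d) (1 * d + a) (1 * g + - g) (1 * b + b) = Mx (a + d) (a + d) 0 (b + b).
  by apply: Mx_eq; ring.
have e2 : Mx (1 * a + d) (1 * d + a) (- (1 * g + - g)) (- (1 * b + b)) = Mx (a + d) (a + d) 0 (- (b + b)).
  by apply: Mx_eq; ring.
rewrite e1 in cS; rewrite e2 in cS'.
have h := core cS cS'.
have hn : - (b + b) <= `|b + b| by rewrite -normrN ler_norm.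
have hn0 := normr_ge0 (b + b).
have p2 : 0 <= (`|b + b| + (b + b)) * t by apply: mulr_ge0; [lra | exact: ltW].
have p1 : 0 <= `|b + b| * t by apply: mulr_ge0; [lra | exact: ltW].
rewrite !mulrDl in p2; lra.
Qed.

End WithT.

Definition iota (i j : 'I_2) (v : V) : M2 V := \matrix_(k, l) (if (k == i) && (l == j) then v else 0).

Lemma iota_lin i j a u v : iota i j (a *: u + v) = a *: iota i j u + iota i j v.
Proof. by apply/matrixP => k l; rewrite !mxE; case: ifP => _; rewrite ?scaler0 ?addr0. Qed.

Lemma M2_decomp (x : M2 V) : x = \sum_(i < 2) \sum_(j < 2) iota i j (x i j).
Proof.
apply/matrixP => k l; rewrite M2sumE; under eq_bigr do rewrite M2sumE.
rewrite !sum2 !mxE.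
by case: (I2_cases k) => ->; case: (I2_cases l) => -> /=; rewrite ?addr0 ?add0r.
Qed.

Section WithS.
Variable t : R.
Variable s : M2 V -> R.
Hypothesis sL : forall k x y, s (k *: x + y) = k * s x + s y.
Hypothesis sP : forall x, PW x -> 0 <= s x.
Hypothesis sG : forall a d g b, s (Mx a d g b) = a + d + b * t.
Hypothesis t0 : 0 < t.

Lemma sI i j a u v : s (iota i j (a *: u + v)) = a * s (iota i j u) + s (iota i j v).
Proof. by rewrite iota_lin sL. Qed.

Lemma s_anti z : sap z = 0 -> s z = 0.
Proof.
move=> hz.
have h1 : 0 <= s z by apply: sP; rewrite /PW hz -sap0; exact: PW0.
have h2 : 0 <= s (- z) by apply: sP; rewrite /PW sapN hz oppr0 -sap0; exact: PW0.
rewrite (lfN sL) in h2; lra.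
Qed.

Lemma s_herm i j v : s (iota i j (inv v)) = s (iota j i v).
Proof.
have hz : sap (iota j i v - iota i j (inv v)) = 0.
  apply/matrixP => k l; rewrite !mxE (andbC (l == j)) (andbC (l == i)).
  case: ((k == j) && (l == i)); case: ((k == i) && (l == j));
  by rewrite ?invB ?invN ?invK ?inv0 ?subr0 ?sub0r ?add0r ?addr0 ?opprK ?subrr ?addNr ?addrN ?scaler0 //
     ?addrA ?subrK ?subrr ?scaler0.
have := s_anti hz; rewrite (lfB sL) => /eqP; rewrite subr_eq0 => /eqP.
by move=> ->.
Qed.

Definition phi (v : V) : 'M[R]_2 := \matrix_(i, j) s (iota i j v).

Lemma phi_lin a u v : phi (a *: u + v) = a *: phi u + phi v.
Proof. by apply/matrixP => i j; rewrite !mxE sI. Qed.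

Lemma iota_Mx00 : iota ord0 ord0 e = Mx 1 0 0 0.
Proof. by rewrite /Mx; apply: m2_eq; rewrite !mxE /= ?scale1r ?scale0r ?addr0 ?subr0. Qed.
Lemma iota_Mx11 : iota ord_max ord_max e = Mx 0 1 0 0.
Proof. by rewrite /Mx; apply: m2_eq; rewrite !mxE /= ?scale1r ?scale0r ?addr0 ?subr0. Qed.
Lemma iota_Mx01 : iota ord0 ord_max e + iota ord_max ord0 e = Mx 0 0 1 0.
Proof. by rewrite /Mx; apply: m2_eq; rewrite !mxE /= ?scale1r ?scale0r ?addr0 ?subr0 ?add0r. Qed.
Lemma iota_Xw : iota ord0 ord_max w - iota ord_max ord0 w = Xw.
Proof. by rewrite /Xw /Mx; apply: m2_eq; rewrite !mxE /= ?scale1r ?scale0r ?addr0 ?subr0 ?add0r ?sub0r ?oppr0. Qed.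

Lemma phi_unit : phi e = 1%:M.
Proof.
have h01 := s_herm ord0 ord_max e; rewrite e_sa in h01.
have hs := congr1 s iota_Mx01; rewrite sG (lfD sL) in hs.
apply: mx2P; rewrite !mxE /=.
- by rewrite iota_Mx00 sG; lra.
- lra.
- lra.
- by rewrite iota_Mx11 sG; lra.
Qed.

Lemma phi_cp m (x : 'M[V]_m) : cone m x -> block_psd (fun p q => phi (x p q)).
Proof.
move=> cx; split.
  move=> p q; apply/matrixP => i j; rewrite !mxE.
  by rewrite -(sa_entry q p (coneSA cx)) s_herm.
move=> xi.
pose be : 'M[R]_(m, 2) := \matrix_(p, i) xi p i ord0.
have cY := coneC be cx.
have := sP (x := mxcomp be^T x be); rewrite /PW sap_sa; last exact: coneSA cY.
move=> /(_ cY); rewrite {1}(M2_decomp (mxcomp be^T x be)) (lf_sum sL).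
under eq_bigr do rewrite (lf_sum sL).
have sIl i j := sI i j.
under eq_bigr do under eq_bigr do rewrite mxE (lf_sum (sIl _ _)).
under eq_bigr do under eq_bigr do under eq_bigr do rewrite (lf_sum (sIl _ _)).
under eq_bigr do under eq_bigr do under eq_bigr do under eq_bigr do rewrite (lfZ (sIl _ _)).
move=> h; apply: le_trans h _; rewrite le_eqVlt; apply/orP; left; apply/eqP.
under [RHS]eq_bigr do under eq_bigr do rewrite mxE.
under [RHS]eq_bigr do under eq_bigr do under eq_bigr do rewrite mxE big_distrl.
under [RHS]eq_bigr do under eq_bigr do rewrite exchange_big.
under [LHS]eq_bigr do rewrite exchange_big.
under [LHS]eq_bigr do under eq_bigr do rewrite exchange_big.
rewrite exchange_big.
under [LHS]eq_bigr do rewrite exchange_big.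
apply: eq_bigr => p _; apply: eq_bigr => q _; apply: eq_bigr => i _; apply: eq_bigr => j _.
rewrite !mxE /=; rewrite mulrAC; congr (_ * _); congr (_ * _).
Qed.

Lemma phi_ucp : ucp cone e phi.
Proof. split; [exact: phi_lin | exact: phi_unit | exact: phi_cp]. Qed.

Lemma phi_contra : (forall v, (phi v)^T = phi v) -> False.
Proof.
move=> h; have := congr1 (fun M : 'M[R]_2 => M ord_max ord0) (h w); rewrite !mxE => e1.
have := congr1 s iota_Xw; rewrite (lfB sL) e1 subrr /Xw sG => e2.
rewrite mul1r !add0r in e2; by move: t0; rewrite -e2 ltxx.
Qed.

End WithS.

Lemma part2_final : (forall n (phi : V -> 'M[R]_n), ucp cone e phi -> forall v, (phi v)^T = phi v) -> False.
Proof.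
move=> H.
have [t [t0 tnc]] := exists_t.
have G0u : G0 t (Mx 1 1 0 0, 2) by exists 1, 1, 0, 0; rewrite mul0r addr0.
have [s [sL sP sG']] := riesz PWD PWZ PW0 unitPW (@G0lin t) (G0pos t0 tnc) G0u.
have sG a d g b : s (Mx a d g b) = a + d + b * t by apply: sG'; exists a, d, g, b.
exact: (phi_contra sL sG t0 (H 2%N _ (phi_ucp sL sP sG))).
Qed.

End P2.

Lemma part2 (R : realType) (V : lmodType R) (inv : V -> V) (cone : forall n, 'M[V]_n -> Prop) (e : V) :
  real_opsys inv cone e ->
  (trivial_involution inv <->
   forall (n : nat) (phi : V -> 'M[R]_n), ucp cone e phi -> forall v : V, (phi v)^T = phi v).
Proof.
move=> [[invL invK coneSA coneD coneZ] [coneP coneC arch archC]].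
split.
- move=> triv n phi [phiL phie phiC] v.
  pose x : 'M[V]_1 := \matrix_(i, j) v.
  have sax : sa_mx inv x by apply/matrixP => i j; rewrite !mxE triv.
  have [r [r0 c]] := arch 1%N x sax.
  have [hs _] := phiC 1%N _ c.
  have := hs ord0 ord0; rewrite !mxE eqxx phiL phie => h.
  apply: (addrI (r *: 1%:M)); rewrite -[in RHS]h raddfD /=.
  by rewrite linearZ /= trmx1.
- move=> H v.
  have [w0|wne] := eqVneq (v - inv v) 0.
    by move/eqP: w0; rewrite subr_eq0 => /eqP h; rewrite -h.
  exfalso; apply: (part2_final invL invK coneSA coneD coneZ coneP coneC arch archC _ wne H).
  by rewrite (invB invL) invK opprB.
Qed.

Theorem corollary4p3 (R : realType) :
  (forall (E F : lmodType R) (pair : F -> E -> R)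
          (K : forall n, 'M[E]_n -> Prop),
     dual_pairing pair -> compact_nc_convex pair K ->
     (AK_trivial_involution pair K <-> nc_symmetric K))
  /\
  (forall (V : lmodType R) (inv : V -> V) (cone : forall n, 'M[V]_n -> Prop) (e : V),
     real_opsys inv cone e ->
     (trivial_involution inv <->
      forall (n : nat) (phi : V -> 'M[R]_n), ucp cone e phi ->
        forall v : V, (phi v)^T = phi v)).
Proof.
split.
- move=> E F pair K dp [Kc _]; split.
  + exact: part1_fwd dp.
  + exact: part1_back dp Kc.
- exact: part2.
Qed.
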